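(* Let $k$ be a field of characteristic $p>0$, $m\ge1$, and let $G=\ker(F:W_m\to W_m)$, the finite group scheme with Hopf algebra $R=k[x_0,\dots,x_{m-1}]/(x_0^p,\dots,x_{m-1}^p)$ (comultiplication given by Witt vector addition). Let $M$ be a finite-dimensional $R$-comodule with comodule map $c_M$ and $v\in M\setminus\{0\}$. Write $c_M(v)=\sum_{\underline i\in\{0,\dots,p-1\}^m}v_{\underline i}\otimes\underline x^{\underline i}$, where $\underline x^{\underline i}=\prod_{\nu=0}^{m-1}x_\nu^{i_\nu}$. Order $\{0,\dots,p-1\}^m$ by $\underline i\succeq\underline i'$ iff $\sum_\nu i_\nu p^\nu\ge\sum_\nu i'_\nu p^\nu$. If $\underline j$ is maximal among the $\underline i$ with $v_{\underline i}\ne0$, then $v_{\underline j}\in M^G$.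
   Context: $W_m$ is the group scheme of truncated Witt vectors of length $m$ over $k$, $F$ the relative Frobenius $(a_0,\dots,a_{m-1})\mapsto(a_0^p,\dots,a_{m-1}^p)$. An $R$-comodule is a $k$-vector space $M$ with a $k$-linear map $c_M:M\to M\otimes_kR$ satisfying coassociativity $(\mathrm{id}\otimes c)\circ c_M=(c_M\otimes\mathrm{id})\circ c_M$ and the counit axiom $(\mathrm{id}\otimes u)\circ c_M=\mathrm{id}$; equivalently a representation of $G$ on $M$. $M^G=\{w\in M:c_M(w)=w\otimes1\}$. *)

(* Defs.v *)
From HB Require Import structures.
From mathcomp Require Import all_boot all_order all_algebra.
From mathcomp Require Import mpoly.
Set Implicit Arguments. Unset Strict Implicit. Unset Printing Implicit Defensive.
Import Order.TTheory GRing.Theory Num.Theory.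
Local Open Scope ring_scope.

Definition midx (p m : nat) := {ffun 'I_m -> 'I_p}.

(* The variables X_nu = x_nu (x) 1 and Y_nu = 1 (x) x_nu of k[X,Y] (2m variables). *)
Definition wX (m : nat) (nu : 'I_m) : {mpoly int[m + m]} := 'X_(lshift m nu).
Definition wY (m : nat) (nu : 'I_m) : {mpoly int[m + m]} := 'X_(rshift m nu).

(* S_0, ..., S_{m-1} are the Witt vector addition polynomials (over Z):
   they are characterized (uniquely, Z[X,Y] being torsion free) by the
   ghost-component identities
     sum_{k<=n} p^k S_k^(p^(n-k)) = sum_{k<=n} p^k (X_k^(p^(n-k)) + Y_k^(p^(n-k))). *)
Definition witt_add_polys (p m : nat) (S : 'I_m -> {mpoly int[m + m]}) : Prop :=
  forall n : 'I_m,
    \sum_(k < m | (k <= n)%N) (p ^ k)%:R * S k ^+ (p ^ (n - k))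
    = \sum_(k < m | (k <= n)%N)
        (p ^ k)%:R * (wX k ^+ (p ^ (n - k)) + wY k ^+ (p ^ (n - k))).

Definition monXY (p m : nat) (j l : midx p m) : 'X_{1..m + m} :=
  [multinom (match split t with inl a => nat_of_ord (j a)
                                 | inr b => nat_of_ord (l b) end) | t < m + m].

(* Structure constants of the comultiplication of
   R = k[x_0..x_{m-1}]/(x_nu^p) in the monomial basis:
   Delta(x^i) = prod_nu S_nu(x (x) 1, 1 (x) x)^(i_nu)
              = sum_{j,l} wcomul S i j l  x^j (x) x^l
   (reduction modulo (X_nu^p, Y_nu^p) just keeps the coefficients of the
   monomials with all exponents < p; the integer coefficients are mapped to k). *)
Definition wcomul (k : fieldType) (p m : nat) (S : 'I_m -> {mpoly int[m + m]})
  (i j l : midx p m) : k :=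
  ((\prod_(nu < m) S nu ^+ i nu) @_ (monXY j l))%:~R.

Definition midx0 (p m : nat) (H : (0 < p)%N) : midx p m := [ffun _ => Ordinal H].

(* An R-comodule structure on the finite-dimensional k-space M, written in the
   monomial basis of R: c_M(v) = sum_i (D i v) (x) x^i, with D i : 'End(M)
   (k-linearity of c_M is linearity of every D i). *)
Definition is_comodule (k : fieldType) (p m : nat) (H : (0 < p)%N)
  (S : 'I_m -> {mpoly int[m + m]}) (M : vectType k) (D : midx p m -> 'End(M)) : Prop :=
  (* counit axiom: (id (x) u) o c_M = id, where u(x^i) = [i = 0] *)
  (forall v : M, D (midx0 m H) v = v) /\
  (* coassociativity: (id (x) Delta) o c_M = (c_M (x) id) o c_M *)
  (forall (j l : midx p m) (v : M),
      D j (D l v) = \sum_(i : midx p m) wcomul k S i j l *: D i v).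

(* M^G = { w | c_M(w) = w (x) 1 } *)
Definition comod_invariant (k : fieldType) (p m : nat) (H : (0 < p)%N)
  (M : vectType k) (D : midx p m -> 'End(M)) (w : M) : Prop :=
  forall i : midx p m, D i w = (if i == midx0 m H then w else 0).

Definition midx_weight (p m : nat) (i : midx p m) : nat :=
  (\sum_(nu < m) i nu * p ^ nu)%N.

(* Main.v *)
Require Import Defs.
From HB Require Import structures.
From mathcomp Require Import all_boot all_order all_algebra.
From mathcomp Require Import mpoly.
Import Order.TTheory GRing.Theory Num.Theory.

Local Open Scope ring_scope.

Definition wt (p m : nat) (s : 'I_(m + m)) : nat :=
  match split s with inl a => (p ^ a)%N | inr b => (p ^ b)%N end.

Definition wwgt (p m : nat) (t : 'X_{1..m + m}) : nat :=
  (\sum_(s < m + m) t s * wt p m s)%N.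

Lemma wwgt0 p m : wwgt p m 0%MM = 0%N.
Proof. by rewrite /wwgt big1 // => s _; rewrite mnm0E mul0n. Qed.

Lemma wwgtD p m : {morph wwgt p m : m1 m2 / (m1 + m2)%MM >-> (m1 + m2)%N}.
Proof.
move=> m1 m2; rewrite /wwgt -big_split /=; apply/eq_bigr=> i _.
by rewrite mnmDE mulnDl.
Qed.

HB.instance Definition _ p m := isMeasure.Build (m + m) (wwgt p m) (wwgt0 p m) (@wwgtD p m).

Lemma wwgt1 p m s : wwgt p m U_(s)%MM = wt p m s.
Proof.
rewrite /wwgt (bigD1 s) //= mnm1E eqxx mul1n.
rewrite big1 ?addn0 //= => j ne_ij; rewrite mnm1E.
by rewrite eq_sym (negbTE ne_ij) mul0n.
Qed.

Notation whom p m d := (@ishomog1 (m + m) int d (wwgt p m)).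

Lemma homX p m (s : 'I_(m+m)) : ('X_s : {mpoly int[m+m]}) \is whom p m (wt p m s).
Proof. by rewrite dhomogX /= wwgt1. Qed.

Lemma wt_l p m (k : 'I_m) : wt p m (lshift m k) = (p ^ k)%N.
Proof. by rewrite /wt (unsplitK (inl k : 'I_m + 'I_m)). Qed.
Lemma wt_r p m (k : 'I_m) : wt p m (rshift m k) = (p ^ k)%N.
Proof. by rewrite /wt (unsplitK (inr k : 'I_m + 'I_m)). Qed.

Lemma homXe p m (s : 'I_(m+m)) e d : (wt p m s * e)%N = d ->
  ('X_s : {mpoly int[m+m]}) ^+ e \is whom p m d.
Proof. by move=> <-; apply: dhomogMn; apply: homX. Qed.

Lemma hom_cancel p m d (q : {mpoly int[m+m]}) c : (0 < c)%N ->
  q *+ c \is whom p m d -> q \is whom p m d.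
Proof.
move=> c0 /dhomogP h; apply/dhomogP => t ht; apply: h.
move: ht; rewrite !mcoeff_msupp mcoeffMn mulrn_eq0 negb_or => ->.
by rewrite -lt0n c0.
Qed.

Lemma homS p m (Hp : (0 < p)%N) (S : 'I_m -> {mpoly int[m + m]})
  (HS : witt_add_polys p S) (n : 'I_m) : S n \is whom p m (p ^ n)%N.
Proof.
suff H : forall N (n : 'I_m), (n < N)%N -> S n \is whom p m (p ^ n)%N.
  exact: (H n.+1).
elim=> [//|N IH] {}n; rewrite ltnS leq_eqVlt => /orP[/eqP En|]; last exact: IH.
have := HS n; rewrite (bigD1 n) //= subnn expn0 expr1 => /(canRL (addrK _)) E.
apply: (@hom_cancel _ _ _ _ (p ^ n)%N); first by rewrite expn_gt0 Hp.
rewrite -mulr_natl E; apply: rpredB.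
  apply: rpred_sum => k hk; rewrite mulr_natl; apply: rpredMn; apply: rpredD.
    by apply: homXe; rewrite wt_l -expnD subnKC.
  by apply: homXe; rewrite wt_r -expnD subnKC.
apply: rpred_sum => k /andP[hk kn]; rewrite mulr_natl; apply: rpredMn.
have kn' : (k < n)%N by rewrite ltn_neqAle hk andbT.
have kN : (k < N)%N by rewrite -En.
have := IH k kN.
move/dhomogMn => /(_ (p ^ (n - k))%N); by rewrite -expnD subnKC // ltnW.
Qed.

Lemma homP p m (Hp : (0 < p)%N) (S : 'I_m -> {mpoly int[m + m]})
  (HS : witt_add_polys p S) (i : midx p m) :
  \prod_(nu < m) S nu ^+ i nu \is whom p m (midx_weight i).
Proof.
rewrite /midx_weight.
apply: (big_rec2 (fun d (q : {mpoly int[m+m]}) => q \is whom p m d)).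
  exact: dhomog1.
move=> nu d q _ hq; apply: dhomogM => //.
rewrite mulnC; apply: dhomogMn; exact: homS.
Qed.

Lemma wwgt_mon p m (a b : midx p m) :
  wwgt p m (monXY a b) = (midx_weight a + midx_weight b)%N.
Proof.
rewrite /wwgt big_split_ord /midx_weight; congr (_ + _)%N; apply: eq_bigr => nu _.
  by rewrite wt_l /monXY mnmE (unsplitK (inl nu : 'I_m + 'I_m)).
by rewrite wt_r /monXY mnmE (unsplitK (inr nu : 'I_m + 'I_m)).
Qed.

Lemma weight_pos p m (Hp : (0 < p)%N) (i : midx p m) :
  i != midx0 m Hp -> (0 < midx_weight i)%N.
Proof.
apply: contraR; rewrite -leqNgt leqn0 /midx_weight => /eqP H.
apply/eqP/ffunP => nu; rewrite ffunE; apply: val_inj => /=.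
have : (i nu * p ^ nu <= 0)%N.
  by rewrite -H (bigD1 nu) //= leq_addr.
rewrite leqn0 muln_eq0 expn_eq0 => /orP[/eqP //|/andP[h _]].
by move: Hp; rewrite lt0n h.
Qed.

Theorem corollary3p10 (k : fieldType) (p m : nat) (Hp : (0 < p)%N)
  (pchar_k : p \in [pchar k]) (Hm : (1 <= m)%N)
  (S : 'I_m -> {mpoly int[m + m]}) (HS : witt_add_polys p S)
  (M : vectType k) (D : midx p m -> 'End(M)) (HM : @is_comodule k p m Hp S M D)
  (v : M) (Hv : v != 0) (j : midx p m)
  (Hj : D j v != 0)
  (Hmax : forall i : midx p m, D i v != 0 ->
            ~ (midx_weight j < midx_weight i)%N) :
  @comod_invariant k p m Hp M D (D j v).
Proof.
case: HM => H0 Hco i.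
case: (eqVneq i (midx0 m Hp)) => [->|ne]; first exact: H0.
rewrite Hco; apply: big1 => i' _.
case: (eqVneq (D i' v) 0) => [->|nz]; first by rewrite scaler0.
have Hlt := Hmax i' nz.
suff -> : wcomul k S i' i j = 0 by rewrite scale0r.
rewrite /wcomul (@dhomog_nemf_coeff _ _ (wwgt p m) (midx_weight i')) ?homP //=.
rewrite wwgt_mon; apply/eqP => E; apply: Hlt; rewrite -E.
by rewrite -{1}[midx_weight j]add0n ltn_add2r weight_pos.
Qed.
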